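(* Let $u(x,t)$ be sufficiently smooth in $x$ (with bounded derivatives), $h>0$, and define the operators $$\mathscr L_1=\frac{1}{h^2}\Big(1-\frac1{90}\delta_x^4\Big)^{-1}\delta_x^2\Big(1-\frac1{12}\delta_x^2\Big),\qquad \mathscr L_2=\frac{1}{h^2}\Big(1+\frac1{560}\delta_x^6\Big)^{-1}\delta_x^2\Big(1-\frac1{12}\delta_x^2+\frac1{90}\delta_x^4\Big).$$ Then $$\frac{\partial^2u(x_j,t_k)}{\partial x^2}=\mathscr L_1u(x_j,t_k)+O(h^6)\quad\text{and}\quad \frac{\partial^2u(x_j,t_k)}{\partial x^2}=\mathscr L_2u(x_j,t_k)+O(h^8).$$
   Context: $\delta_x$ is the centered difference in $x$ with step $h$: $\delta_x u(x,t)=u(x+\frac h2,t)-u(x-\frac h2,t)$, so $\delta_x^2u(x,t)=u(x+h,t)-2u(x,t)+u(x-h,t)$, and $\delta_x^{2m}=(\delta_x^2)^m$. The operators act on functions of $x$ (with $t$ fixed), and $x_j=jh$, $t_k$ are grid points; the inverses $(1-\frac1{90}\delta_x^4)^{-1}$, $(1+\frac1{560}\delta_x^6)^{-1}$ are understood as the inverses of these difference operators (e.g. by their convergent Neumann series on bounded functions). *)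

(* Defs.v *)
From Stdlib Require Import Reals.
From Coquelicot Require Import Coquelicot.
Open Scope R_scope.

Definition d2 (h : R) (f : R -> R) : R -> R :=
  fun x => f (x + h) - 2 * f x + f (x - h).

(* delta_x^(2m) = (delta_x^2)^m *)
Fixpoint d2pow (h : R) (m : nat) (f : R -> R) : R -> R :=
  match m with
  | O => f
  | S m' => d2 h (d2pow h m' f)
  end.

(* (1 - 1/90 delta^4)^{-1} g, via its Neumann series sum_n (1/90)^n delta^{4n} g *)
Definition inv1 (h : R) (g : R -> R) : R -> R :=
  fun x => Series (fun n => (1/90)^n * d2pow h (2 * n) g x).

(* (1 + 1/560 delta^6)^{-1} g, via its Neumann series sum_n (-1/560)^n delta^{6n} g *)
Definition inv2 (h : R) (g : R -> R) : R -> R :=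
  fun x => Series (fun n => (-(1/560))^n * d2pow h (3 * n) g x).

Definition L1 (h : R) (f : R -> R) : R -> R :=
  fun x => / h^2 * inv1 h (d2 h (fun y => f y - /12 * d2 h f y)) x.

Definition L2 (h : R) (f : R -> R) : R -> R :=
  fun x => / h^2 * inv2 h (d2 h (fun y => f y - /12 * d2 h f y + /90 * d2pow h 2 f y)) x.

(* Main.v *)
Require Import Defs.
From Stdlib Require Import Reals.
From Coquelicot Require Import Coquelicot.
From Stdlib Require Import Lra Lia.
Open Scope R_scope.
Notation fact := Factorial.fact.
Lemma fact_ge1 m : 1 <= INR (fact m).
Proof. apply (le_INR 1). apply Factorial.lt_O_fact. Qed.

Lemma ex_derive_n_opp f (Hd : forall n x, ex_derive_n f n x) n x :
  ex_derive_n (fun y => f (- y)) n x.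
Proof.
  destruct n as [|n]; [exact I|].
  simpl.
  apply ex_derive_ext with (fun s => (-1)^n * Derive_n f n (- s)).
  { intros s. symmetry. apply Derive_n_comp_opp. apply filter_forall. intros; apply Hd. }
  apply ex_derive_scal.
  apply (ex_derive_comp (Derive_n f n) (fun s => - s)).
  - apply (Hd (S n)).
  - auto_derive; exact I.
Qed.

Lemma sum0 f n x : sum_f_R0 (fun m => 0 ^ m / INR (fact m) * Derive_n f m x) n = f x.
Proof.
  induction n; simpl. - field.
  - rewrite IHn, Rmult_0_l. unfold Rdiv. rewrite !Rmult_0_l. apply Rplus_0_r.
Qed.

Lemma R1abs : Rabs (-1) = 1.
Proof. rewrite Rabs_left; lra. Qed.

Lemma rem_bound c a F D M k : Rabs c = Rabs a -> 1 <= F -> Rabs D <= M ->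
  Rabs (c ^ k / F * D) <= M * Rabs a ^ k.
Proof.
  intros Hc HF HD.
  rewrite Rabs_mult, Rabs_div by lra. rewrite <- RPow_abs, Hc, (Rabs_pos_eq F) by lra.
  assert (0 <= Rabs a ^ k) by (apply pow_le, Rabs_pos).
  assert (0 <= Rabs D) by apply Rabs_pos.
  apply Rle_trans with (Rabs a ^ k * 1 * M).
  - apply Rmult_le_compat; auto.
    + unfold Rdiv; apply Rmult_le_pos; auto. left; apply Rinv_0_lt_compat; lra.
    + unfold Rdiv. apply Rmult_le_compat_l; auto. rewrite <- Rinv_1. apply Rinv_le_contravar; lra.
  - lra.
Qed.

Lemma taylor f (Hd : forall n x, ex_derive_n f n x) n M
  (HM : forall x, Rabs (Derive_n f (S n) x) <= M) x a :
  Rabs (f (x + a) - sum_f_R0 (fun m => a ^ m / INR (fact m) * Derive_n f m x) n)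
    <= M * Rabs a ^ (S n).
Proof.
  assert (HM0 : 0 <= M) by (eapply Rle_trans; [apply Rabs_pos|apply (HM 0)]).
  assert (Hf := fact_ge1 (S n)). assert (Hfp : 0 < INR (fact (S n))) by lra.
  destruct (Rtotal_order a 0) as [Ha|[Ha|Ha]].
  - set (g := fun y => f (- y)).
    destruct (Taylor_Lagrange g n (- x) (- x - a)) as [z [Hz E]]. lra.
    { intros; apply ex_derive_n_opp; auto. }
    unfold g at 1 in E. replace (- (- x - a)) with (x + a) in E by ring.
    rewrite E.
    replace (sum_f_R0 _ n) with (sum_f_R0 (fun m => a ^ m / INR (fact m) * Derive_n f m x) n).
    2:{ apply sum_eq. intros i _. unfold g. rewrite Derive_n_comp_opp.
        2:{ apply filter_forall. intros; apply Hd. }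
        replace (- - x) with x by ring. replace (- x - a - - x) with (-1 * a) by ring.
        rewrite Rpow_mult_distr.
        assert (Hs : (-1)^i * (-1)^i = 1).
        { rewrite <- Rpow_mult_distr. replace (-1 * -1) with 1 by ring. now rewrite pow1. }
        transitivity ((-1)^i * (-1)^i * (a ^ i / INR (fact i) * Derive_n f i x)).
        { rewrite Hs; ring. } unfold Rdiv; ring. }
    match goal with |- Rabs (?A + ?B - ?A) <= _ => replace (A + B - A) with B by ring end.
    unfold g. rewrite Derive_n_comp_opp. 2:{ apply filter_forall. intros; apply Hd. }
    replace (- x - a - - x) with (-1 * a) by ring.
    apply rem_bound; auto.
    rewrite Rabs_mult, R1abs; ring.
    rewrite Rabs_mult, <- RPow_abs, R1abs, pow1, Rmult_1_l; apply HM.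
  - subst a. rewrite Rplus_0_r, sum0. replace (f x - f x) with 0 by ring.
    rewrite Rabs_R0. apply Rmult_le_pos; auto. apply pow_le; lra.
  - destruct (Taylor_Lagrange f n x (x + a)) as [z [Hz E]]. lra.
    { intros; apply Hd. }
    rewrite E. replace (x + a - x) with a by ring.
    match goal with |- Rabs (?A + ?B - ?A) <= _ => replace (A + B - A) with B by ring end.
    apply rem_bound; auto.
Qed.

Lemma ex_derive_n_Dn f (Hd : forall n x, ex_derive_n f n x) p n x :
  ex_derive_n (Derive_n f p) n x.
Proof.
  destruct n as [|n]; [exact I|]. simpl.
  apply ex_derive_ext with (Derive_n f (n + p)).
  { intros; symmetry; apply Derive_n_comp. }
  apply (Hd (S (n + p))).
Qed.

Lemma taylor_p f (Hd : forall n x, ex_derive_n f n x) p n M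
  (HM : forall x, Rabs (Derive_n f (S n + p) x) <= M) x a :
  Rabs (Derive_n f p (x + a) - sum_f_R0 (fun m => a ^ m / INR (fact m) * Derive_n f (m + p) x) n)
    <= M * Rabs a ^ (S n).
Proof.
  replace (sum_f_R0 _ n) with (sum_f_R0 (fun m => a ^ m / INR (fact m) * Derive_n (Derive_n f p) m x) n).
  2:{ apply sum_eq; intros. now rewrite Derive_n_comp. }
  apply taylor. apply ex_derive_n_Dn; auto.
  intros y. rewrite Derive_n_comp. apply HM.
Qed.
Lemma d2pow_ext h m F G x : (forall y, F y = G y) -> d2pow h m F x = d2pow h m G x.
Proof.
  intros H. revert x. induction m; intros x; simpl. apply H.
  unfold Defs.d2. rewrite !IHm. reflexivity.
Qed.

Lemma d2pow_lin h m a b F G x :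
  d2pow h m (fun y => a * F y + b * G y) x = a * d2pow h m F x + b * d2pow h m G x.
Proof.
  revert x. induction m; intros x; simpl. reflexivity.
  unfold Defs.d2. rewrite !IHm. ring.
Qed.

Lemma d2pow_comp h m k w x : d2pow h m (d2pow h k w) x = d2pow h (m + k) w x.
Proof.
  revert x. induction m; intros x; simpl. reflexivity.
  unfold Defs.d2. rewrite !IHm. reflexivity.
Qed.

Lemma d2pow_bound h m F B : (forall y, Rabs (F y) <= B) -> forall x,
  Rabs (d2pow h m F x) <= 4 ^ m * B.
Proof.
  intros H. induction m; intros x; simpl. rewrite Rmult_1_l; apply H.
  unfold Defs.d2.
  assert (H1 := IHm (x + h)). assert (H2 := IHm x). assert (H3 := IHm (x - h)).
  apply Rabs_le_between in H1, H2, H3. apply Rabs_le_between. lra.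
Qed.

Lemma neumann h k a w r g W B
  (Hw : forall y, Rabs (w y) <= W) (Hr : forall y, Rabs (r y) <= B)
  (Hg : forall y, g y = w y - a * d2pow h k w y + r y)
  (Ha : Rabs a * 4 ^ k < 1) x :
  Rabs (Series (fun n => a ^ n * d2pow h (k * n) g x) - w x) <= B / (1 - Rabs a * 4 ^ k).
Proof.
  set (q := Rabs a * 4 ^ k).
  assert (Hq0 : 0 <= q) by (unfold q; apply Rmult_le_pos; [apply Rabs_pos | apply pow_le; lra]).
  assert (HB : 0 <= B) by (eapply Rle_trans; [apply Rabs_pos | apply (Hr 0)]).
  set (T := fun n => a ^ n * d2pow h (k * n) w x).
  set (R' := fun n => a ^ n * d2pow h (k * n) r x).
  assert (Hgeo : forall (F : R -> R) C, (forall y, Rabs (F y) <= C) -> forall n,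
     Rabs (a ^ n * d2pow h (k * n) F x) <= C * q ^ n).
  { intros F C HF n. rewrite Rabs_mult, <- RPow_abs.
    assert (Hb := d2pow_bound h (k * n) F C HF x).
    rewrite pow_mult in Hb. unfold q. rewrite Rpow_mult_distr.
    assert (0 <= Rabs a ^ n) by (apply pow_le, Rabs_pos).
    apply Rle_trans with (Rabs a ^ n * ((4 ^ k) ^ n * C)).
    apply Rmult_le_compat_l; auto. lra. }
  assert (Hexg : forall C, ex_series (fun n => C * q ^ n)).
  { intros C. apply (ex_series_ext (fun n => q ^ n * C)). intros n; apply Rmult_comm.
    apply ex_series_scal_r. eexists. apply is_series_geom.
    rewrite Rabs_pos_eq; auto. }
  assert (ExT : ex_series T).
  { apply (ex_series_le (V := R_CompleteNormedModule)) with (fun n => W * q ^ n); auto.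
    intros n. apply (Hgeo w W Hw n). }
  assert (ExR : ex_series (fun n => Rabs (R' n))).
  { apply (ex_series_le (V := R_CompleteNormedModule)) with (fun n => B * q ^ n); auto.
    intros n. unfold norm; simpl. unfold abs; simpl. rewrite Rabs_Rabsolu. apply Hgeo; auto. }
  assert (ExR' : ex_series R').
  { apply (ex_series_le (V := R_CompleteNormedModule)) with (fun n => Rabs (R' n)); auto. intros n; apply Rle_refl. }
  assert (ExTS : ex_series (fun n => T (S n))).
  { apply (proj1 (ex_series_incr_1 T)). exact ExT. }
  rewrite (Series_ext _ (fun n => (T n - T (S n)) + R' n)).
  2:{ intros n. unfold T, R'. rewrite (d2pow_ext h (k * n) g
         (fun y => 1 * (1 * w y + (- a) * d2pow h k w y) + 1 * r y)).
      2:{ intros y. rewrite Hg. ring. }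
      rewrite d2pow_lin, d2pow_lin, d2pow_comp.
      replace (k * n + k)%nat with (k * S n)%nat by lia. simpl pow. ring. }
  rewrite Series_plus, Series_minus; auto.
  2:{ eapply ex_series_ext; [|apply (@ex_series_minus _ R_NormedModule T (fun n => T (S n)) ExT ExTS)]; intros n; reflexivity. }
  rewrite (Series_incr_1 T ExT).
  replace (T 0%nat) with (w x) by (unfold T; rewrite Nat.mul_0_r, pow_O; simpl; rewrite Rmult_1_l; reflexivity).
  replace (w x + Series (fun k0 => T (S k0)) - Series (fun n => T (S n)) + Series R' - w x)
    with (Series R') by ring.
  eapply Rle_trans. apply Series_Rabs; auto.
  eapply Rle_trans. apply Series_le with (b := fun n => B * q ^ n); auto.
  intros n; split. apply Rabs_pos. apply Hgeo; auto.
  rewrite Series_scal_l, Series_geom. right; unfold Rdiv; reflexivity.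
  rewrite Rabs_pos_eq; auto.
Qed.
Lemma F0 : INR (fact 0) = 1. Proof. reflexivity. Qed.
Lemma F1 : INR (fact 1) = 1. Proof. reflexivity. Qed.
Lemma F2 : INR (fact 2) = 2. Proof. rewrite INR_IZR_INZ. reflexivity. Qed.
Lemma F3 : INR (fact 3) = 6. Proof. rewrite INR_IZR_INZ. reflexivity. Qed.
Lemma F4 : INR (fact 4) = 24. Proof. rewrite INR_IZR_INZ. reflexivity. Qed.
Lemma F5 : INR (fact 5) = 120. Proof. rewrite INR_IZR_INZ. reflexivity. Qed.
Lemma F6 : INR (fact 6) = 720. Proof. rewrite INR_IZR_INZ. reflexivity. Qed.
Lemma F7 : INR (fact 7) = 5040. Proof. rewrite INR_IZR_INZ. vm_compute. reflexivity. Qed.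
Lemma F8 : INR (fact 8) = 40320. Proof. rewrite INR_IZR_INZ. vm_compute. reflexivity. Qed.
Lemma F9 : INR (fact 9) = 362880. Proof. rewrite INR_IZR_INZ. vm_compute. reflexivity. Qed.

Ltac facts := rewrite ?F0, ?F1, ?F2, ?F3, ?F4, ?F5, ?F6, ?F7, ?F8, ?F9 in *.

Lemma hmul_bound h X c : Rabs X <= c -> - (h^2 * c) <= h^2 * X <= h^2 * c.
Proof.
  intros H. apply Rabs_le_between. rewrite Rabs_mult, (Rabs_pos_eq (h^2)) by (apply pow2_ge_0).
  apply Rmult_le_compat_l. apply pow2_ge_0. exact H.
Qed.

Lemma est1 f (Hd : forall n x, ex_derive_n f n x) M
  (HM : forall x, Rabs (Derive_n f 8 x) <= M) h (hp : 0 < h) y :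
  Rabs (Defs.d2 h (fun z => f z - /12 * Defs.d2 h f z) y
        - (h^2 * Derive_n f 2 y - (1/90) * d2pow h 2 (fun z => h^2 * Derive_n f 2 z) y))
   <= 100 * M * h ^ 8.
Proof.
  assert (HM0 : 0 <= M) by (eapply Rle_trans; [apply Rabs_pos|apply (HM 0)]).
  cbn [d2pow]. unfold Defs.d2.
  replace (y + h + h) with (y + 2 * h) by ring.
  replace (y + h - h) with y by ring.
  replace (y - h + h) with y by ring.
  replace (y - h - h) with (y + - (2 * h)) by ring.
  replace (y - h) with (y + - h) by ring.
  assert (A1 := taylor f Hd 7 M HM y h).
  assert (A2 := taylor f Hd 7 M HM y (- h)).
  assert (A3 := taylor f Hd 7 M HM y (2 * h)).
  assert (A4 := taylor f Hd 7 M HM y (- (2 * h))).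
  assert (B1 := hmul_bound h _ _ (taylor_p f Hd 2 5 M HM y h)).
  assert (B2 := hmul_bound h _ _ (taylor_p f Hd 2 5 M HM y (- h))).
  assert (B3 := hmul_bound h _ _ (taylor_p f Hd 2 5 M HM y (2 * h))).
  assert (B4 := hmul_bound h _ _ (taylor_p f Hd 2 5 M HM y (- (2 * h)))).
  apply Rabs_le_between in A1, A2, A3, A4.
  assert (R1 : Rabs h = h) by (apply Rabs_pos_eq; lra).
  assert (R2 : Rabs (- h) = h) by (rewrite Rabs_Ropp; apply Rabs_pos_eq; lra).
  assert (R3 : Rabs (2 * h) = 2 * h) by (apply Rabs_pos_eq; lra).
  assert (R4 : Rabs (- (2 * h)) = 2 * h) by (rewrite Rabs_Ropp; apply Rabs_pos_eq; lra).
  rewrite ?R1, ?R2, ?R3, ?R4 in A1, A2, A3, A4, B1, B2, B3, B4.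
  cbn [sum_f_R0 Nat.add] in *. facts.
  change (Derive_n f 0 y) with (f y) in *.
  match type of A1 with _ <= ?X <= _ => set (a1 := X) in A1 end.
  match type of A2 with _ <= ?X <= _ => set (a2 := X) in A2 end.
  match type of A3 with _ <= ?X <= _ => set (a3 := X) in A3 end.
  match type of A4 with _ <= ?X <= _ => set (a4 := X) in A4 end.
  match type of B1 with _ <= ?X <= _ => set (b1 := X) in B1 end.
  match type of B2 with _ <= ?X <= _ => set (b2 := X) in B2 end.
  match type of B3 with _ <= ?X <= _ => set (b3 := X) in B3 end.
  match type of B4 with _ <= ?X <= _ => set (b4 := X) in B4 end.
  match goal with |- Rabs ?E <= _ => assert (Eq : E = 4/3*(a1+a2) - /12*(a3+a4) - 4/90*(b1+b2) + /90*(b3+b4)) end.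
  { unfold a1,a2,a3,a4,b1,b2,b3,b4. field. }
  rewrite Eq. apply Rabs_le_between. rewrite R1 in A1, B1. rewrite R2 in A2, B2. rewrite R3 in A3, B3. rewrite R4 in A4, B4.
  lra.
Qed.

Ltac is_canon t y h := first [constr_eq t y | constr_eq t (y + h) | constr_eq t (y + - h)
  | constr_eq t (y + 2 * h) | constr_eq t (y + - (2 * h))
  | constr_eq t (y + 3 * h) | constr_eq t (y + - (3 * h))].
Ltac canon F y h := repeat match goal with |- context [F ?t] =>
   tryif is_canon t y h then fail else
   first [ replace t with y by ring | replace t with (y + h) by ring
         | replace t with (y + - h) by ring | replace t with (y + 2 * h) by ring
         | replace t with (y + - (2 * h)) by ring | replace t with (y + 3 * h) by ring
         | replace t with (y + - (3 * h)) by ring ] end.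

Lemma est2 f (Hd : forall n x, ex_derive_n f n x) M
  (HM : forall x, Rabs (Derive_n f 10 x) <= M) h (hp : 0 < h) y :
  Rabs (Defs.d2 h (fun z => f z - /12 * Defs.d2 h f z + /90 * d2pow h 2 f z) y
        - (h^2 * Derive_n f 2 y - (- (1/560)) * d2pow h 3 (fun z => h^2 * Derive_n f 2 z) y))
   <= 5000 * M * h ^ 10.
Proof.
  assert (HM0 : 0 <= M) by (eapply Rle_trans; [apply Rabs_pos|apply (HM 0)]).
  cbn [d2pow]. unfold Defs.d2.
  canon f y h. canon (Derive_n f 2) y h.
  assert (A1 := taylor f Hd 9 M HM y h).
  assert (A2 := taylor f Hd 9 M HM y (- h)).
  assert (A3 := taylor f Hd 9 M HM y (2 * h)).
  assert (A4 := taylor f Hd 9 M HM y (- (2 * h))).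
  assert (A5 := taylor f Hd 9 M HM y (3 * h)).
  assert (A6 := taylor f Hd 9 M HM y (- (3 * h))).
  assert (B1 := hmul_bound h _ _ (taylor_p f Hd 2 7 M HM y h)).
  assert (B2 := hmul_bound h _ _ (taylor_p f Hd 2 7 M HM y (- h))).
  assert (B3 := hmul_bound h _ _ (taylor_p f Hd 2 7 M HM y (2 * h))).
  assert (B4 := hmul_bound h _ _ (taylor_p f Hd 2 7 M HM y (- (2 * h)))).
  assert (B5 := hmul_bound h _ _ (taylor_p f Hd 2 7 M HM y (3 * h))).
  assert (B6 := hmul_bound h _ _ (taylor_p f Hd 2 7 M HM y (- (3 * h)))).
  apply Rabs_le_between in A1, A2, A3, A4, A5, A6.
  assert (R1 : Rabs h = h) by (apply Rabs_pos_eq; lra).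
  assert (R2 : Rabs (- h) = h) by (rewrite Rabs_Ropp; apply Rabs_pos_eq; lra).
  assert (R3 : Rabs (2 * h) = 2 * h) by (apply Rabs_pos_eq; lra).
  assert (R4 : Rabs (- (2 * h)) = 2 * h) by (rewrite Rabs_Ropp; apply Rabs_pos_eq; lra).
  assert (R5 : Rabs (3 * h) = 3 * h) by (apply Rabs_pos_eq; lra).
  assert (R6 : Rabs (- (3 * h)) = 3 * h) by (rewrite Rabs_Ropp; apply Rabs_pos_eq; lra).
  cbn [sum_f_R0 Nat.add] in *. facts.
  change (Derive_n f 0 y) with (f y) in *.
  match type of A1 with _ <= ?X <= _ => set (a1 := X) in A1 end.
  match type of A2 with _ <= ?X <= _ => set (a2 := X) in A2 end.
  match type of A3 with _ <= ?X <= _ => set (a3 := X) in A3 end.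
  match type of A4 with _ <= ?X <= _ => set (a4 := X) in A4 end.
  match type of A5 with _ <= ?X <= _ => set (a5 := X) in A5 end.
  match type of A6 with _ <= ?X <= _ => set (a6 := X) in A6 end.
  match type of B1 with _ <= ?X <= _ => set (b1 := X) in B1 end.
  match type of B2 with _ <= ?X <= _ => set (b2 := X) in B2 end.
  match type of B3 with _ <= ?X <= _ => set (b3 := X) in B3 end.
  match type of B4 with _ <= ?X <= _ => set (b4 := X) in B4 end.
  match type of B5 with _ <= ?X <= _ => set (b5 := X) in B5 end.
  match type of B6 with _ <= ?X <= _ => set (b6 := X) in B6 end.
  match goal with |- Rabs ?E <= _ => assert (Eq : E =
     (1 + 4/12 + 15/90)*(a1+a2) + (-1/12 - 6/90)*(a3+a4) + /90*(a5+a6)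
     - 15/560*(b1+b2) + 6/560*(b3+b4) - 1/560*(b5+b6)) end.
  { unfold a1,a2,a3,a4,a5,a6,b1,b2,b3,b4,b5,b6. field. }
  rewrite Eq. apply Rabs_le_between.
  rewrite R1 in A1, B1. rewrite R2 in A2, B2. rewrite R3 in A3, B3. rewrite R4 in A4, B4.
  rewrite R5 in A5, B5. rewrite R6 in A6, B6.
  lra.
Qed.

Lemma main1 f (Hd : forall n x, ex_derive_n f n x) M8 (HM8 : forall x, Rabs (Derive_n f 8 x) <= M8)
  M2 (HM2 : forall x, Rabs (Derive_n f 2 x) <= M2) h (hp : 0 < h) x :
  Rabs (Derive_n f 2 x - L1 h f x) <= 100 * M8 * (90 / 74) * h ^ 6.
Proof.
  unfold L1, inv1.
  set (w := fun z => h^2 * Derive_n f 2 z).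
  set (g := Defs.d2 h (fun y => f y - /12 * Defs.d2 h f y)).
  assert (N := neumann h 2 (1/90) w (fun z => g z - (w z - 1/90 * d2pow h 2 w z)) g (h^2*M2)
     (100*M8*h^8)).
  assert (H0 : 0 <= h^2) by apply pow2_ge_0.
  specialize (N ltac:(intros y; unfold w; rewrite Rabs_mult, Rabs_pos_eq by exact H0;
                      apply Rmult_le_compat_l; auto)).
  specialize (N ltac:(intros y; apply (est1 f Hd M8 HM8 h hp y))).
  specialize (N ltac:(intros y; cbv beta; ring)).
  rewrite Rabs_pos_eq in N by lra.
  specialize (N ltac:(lra) x).
  set (S := Series _) in *.
  assert (hn : h^2 <> 0) by (apply pow_nonzero; lra).
  replace (Derive_n f 2 x - / h ^ 2 * S) with (- / h^2 * (S - w x)) by (unfold w; field; lra).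
  rewrite Rabs_mult, Rabs_Ropp, Rabs_pos_eq.
  2:{ left; apply Rinv_0_lt_compat; apply pow_lt; lra. }
  apply Rle_trans with (/ h^2 * (100 * M8 * h ^ 8 / (1 - 1 / 90 * 4 ^ 2))).
  - apply Rmult_le_compat_l; auto. left; apply Rinv_0_lt_compat; apply pow_lt; lra.
  - right. field; repeat split; lra.
Qed.

Lemma main2 f (Hd : forall n x, ex_derive_n f n x) M10 (HM10 : forall x, Rabs (Derive_n f 10 x) <= M10)
  M2 (HM2 : forall x, Rabs (Derive_n f 2 x) <= M2) h (hp : 0 < h) x :
  Rabs (Derive_n f 2 x - L2 h f x) <= 5000 * M10 * (560 / 496) * h ^ 8.
Proof.
  unfold L2, inv2.
  set (w := fun z => h^2 * Derive_n f 2 z).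
  set (g := Defs.d2 h (fun y => f y - /12 * Defs.d2 h f y + /90 * d2pow h 2 f y)).
  assert (N := neumann h 3 (- (1/560)) w (fun z => g z - (w z - (- (1/560)) * d2pow h 3 w z)) g (h^2*M2)
     (5000*M10*h^10)).
  assert (H0 : 0 <= h^2) by apply pow2_ge_0.
  specialize (N ltac:(intros y; unfold w; rewrite Rabs_mult, Rabs_pos_eq by exact H0;
                      apply Rmult_le_compat_l; auto)).
  specialize (N ltac:(intros y; apply (est2 f Hd M10 HM10 h hp y))).
  specialize (N ltac:(intros y; cbv beta; ring)).
  rewrite Rabs_Ropp, Rabs_pos_eq in N by lra.
  specialize (N ltac:(lra) x).
  set (S := Series _) in *.
  assert (hn : h^2 <> 0) by (apply pow_nonzero; lra).
  replace (Derive_n f 2 x - / h ^ 2 * S) with (- / h^2 * (S - w x)) by (unfold w; field; lra).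
  rewrite Rabs_mult, Rabs_Ropp, Rabs_pos_eq.
  2:{ left; apply Rinv_0_lt_compat; apply pow_lt; lra. }
  apply Rle_trans with (/ h^2 * (5000 * M10 * h ^ 10 / (1 - 1 / 560 * 4 ^ 3))).
  - apply Rmult_le_compat_l; auto. left; apply Rinv_0_lt_compat; apply pow_lt; lra.
  - right. field; repeat split; lra.
Qed.

Theorem lemma1 (u : R -> R -> R)
  (Hsmooth : forall (t : R) (n : nat) (x : R), ex_derive_n (fun y => u y t) n x)
  (Hbound : forall n : nat, exists M : R, forall x t : R,
      Rabs (Derive_n (fun y => u y t) n x) <= M) :
  (exists C h0 : R, 0 < h0 /\
     forall h : R, 0 < h < h0 -> forall (j : Z) (t : R),
       Rabs (Derive_n (fun y => u y t) 2 (IZR j * h)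
             - L1 h (fun y => u y t) (IZR j * h)) <= C * h ^ 6) /\
  (exists C h0 : R, 0 < h0 /\
     forall h : R, 0 < h < h0 -> forall (j : Z) (t : R),
       Rabs (Derive_n (fun y => u y t) 2 (IZR j * h)
             - L2 h (fun y => u y t) (IZR j * h)) <= C * h ^ 8).
Proof.
  destruct (Hbound 2%nat) as [M2 HM2].
  split.
  - destruct (Hbound 8%nat) as [M8 HM8].
    exists (100 * M8 * (90 / 74)), 1. split; [lra|]. intros h [hp _] j t.
    apply (main1 (fun y => u y t) (fun n x => Hsmooth t n x) M8 (fun x => HM8 x t)
             M2 (fun x => HM2 x t) h hp).
  - destruct (Hbound 10%nat) as [M10 HM10].
    exists (5000 * M10 * (560 / 496)), 1. split; [lra|]. intros h [hp _] j t.
    apply (main2 (fun y => u y t) (fun n x => Hsmooth t n x) M10 (fun x => HM10 x t)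
             M2 (fun x => HM2 x t) h hp).
Qed.
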